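(* Let $G$ be an instance of the rank-maximal matchings problem (with last-resort posts added), let $M$ be a rank-maximal matching in $G$, and let $G_M$ be its switching graph. Then: (1) If $p$ is a post unmatched in $M$, then $p\in\mathcal{E}_1\cap\dots\cap\mathcal{E}_{r+1}$, and therefore $p$ is a sink in $G_M$. (2) A post $p$ belongs to a sink component of $G_M$ if and only if $p\in\mathcal{E}_{r+1}$; a post $p$ belongs to a non-sink component if and only if $p\in\mathcal{U}_{r+1}$. (3) Let $T$ be a directed path in $G_M$ from a post $p$ to some sink $q$. Then $w(T)=0$ if and only if $p\in\mathcal{E}_1\cap\dots\cap\mathcal{E}_{r+1}$.
   Context: An instance is a bipartite graph $G=(\mathcal{A}\cup\mathcal{P},E)$, $\mathcal{A}$ applicants, $\mathcal{P}$ posts, $E=E_1\cup\dots\cup E_r$ disjoint; $(a,p)\in E_i$ means $p$ is an $i$-th choice of $a$, $\mathrm{rank}(a,p)=i$ (ties allowed). Each applicant $a$ gets its own dummy last-resort post $\ell(a)$ with $(a,\ell(a))\in E_{r+1}$; the resulting instance is still called $G$. The signature of a matching is $(x_1,\dots,x_{r+1})$, $x_i$ the number of applicants matched along rank-$i$ edges; a matching is rank-maximal if its signature is lexicographically maximum. Even/odd/unreachable: for a bipartite graph and maximum matching $N$, a vertex is even (odd) if an even (odd) length $N$-alternating path leads to it from an $N$-unmatched vertex, unreachable otherwise; independent of $N$. Irving et al.'s algorithm: $G'_1=(\mathcal{A}\cup\mathcal{P},E_1)$, $M_1$ a maximum matching. For $i=1,\dots,r$: let $\mathcal{E}_i,\mathcal{O}_i,\mathcal{U}_i$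 be the even/odd/unreachable vertices of $G'_i$; delete all edges of rank $>i$ incident to $\mathcal{O}_i\cup\mathcal{U}_i$; delete from $G'_i$ the edges joining $\mathcal{O}_i$ to $\mathcal{O}_i\cup\mathcal{U}_i$; add the remaining edges of $E_{i+1}$ to get $G'_{i+1}$; let $M_{i+1}$ be a maximum matching of $G'_{i+1}$ augmenting $M_i$. With $\mathcal{E}_{r+1},\mathcal{O}_{r+1},\mathcal{U}_{r+1}$ the even/odd/unreachable vertices of $G'_{r+1}$, the reduced graph $G'$ is $G'_{r+1}$ minus the edges joining $\mathcal{O}_{r+1}$ to $\mathcal{O}_{r+1}\cup\mathcal{U}_{r+1}$ (independent of choices). Switching graph: for a rank-maximal $M$ (which matches all applicants), $G_M$ is the directed graph on $\mathcal{P}$ with an edge $(p_i,p_j)$ whenever some applicant $a$ has $(a,p_i)\in M$ and $(a,p_j)\in E(G')$, of weight $\mathrm{rank}(a,p_j)-\mathrm{rank}(a,p_i)$; $w(T)$ is the total weight of a path $T$. A sink is a post with no outgoing edge in $G_M$ lying in $\mathcal{E}_1\cap\dots\cap\mathcal{E}_{r+1}$. A sink component is a connected component of the underlying undirected graph of $G_M$ containing at least one sink; other components are non-sink components. *)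

(* Defs.v *)
From Stdlib Require Import Relations.
From mathcomp Require Import all_boot all_order all_algebra.
Set Implicit Arguments. Unset Strict Implicit. Unset Printing Implicit Defensive.
Import GRing.Theory Num.Theory.

Definition is_matching {A Q : finType} (F : A -> Q -> Prop) (N : {set A * Q}) : Prop :=
  (forall e, e \in N -> F e.1 e.2) /\
  (forall e1 e2, e1 \in N -> e2 \in N -> (e1.1 = e2.1 \/ e1.2 = e2.2) -> e1 = e2).

Definition is_max_matching {A Q : finType} (F : A -> Q -> Prop) (N : {set A * Q}) : Prop :=
  is_matching F N /\ forall N', is_matching F N' -> #|N'| <= #|N|.

Definition adj {A Q : finType} (F : A -> Q -> Prop) (u v : A + Q) : Prop :=
  match u, v with
  | inl a, inr q => F a q
  | inr q, inl a => F a q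
  | _, _ => False
  end.

Definition unmatched {A Q : finType} (N : {set A * Q}) (u : A + Q) : Prop :=
  match u with
  | inl a => forall q, (a, q) \notin N
  | inr q => forall a, (a, q) \notin N
  end.

Definition alt_path {A Q : finType} (F : A -> Q -> Prop) (N : {set A * Q})
    (u v : A + Q) (s : seq (A + Q)) : Prop :=
  [/\ unmatched N u, uniq (u :: s), last u s = v &
   forall i, i < size s ->
     adj F (nth u (u :: s) i) (nth u (u :: s) i.+1) /\
     (adj (fun a q => (a, q) \in N) (nth u (u :: s) i) (nth u (u :: s) i.+1) <-> odd i)].

(* even / odd / unreachable vertices (w.r.t. a maximum matching; the
   notion is independent of the chosen maximum matching) *)
Definition even_v {A Q : finType} (F : A -> Q -> Prop) (v : A + Q) : Prop :=
  exists N u s, is_max_matching F N /\ alt_path F N u v s /\ ~~ odd (size s).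

Definition odd_v {A Q : finType} (F : A -> Q -> Prop) (v : A + Q) : Prop :=
  exists N u s, is_max_matching F N /\ alt_path F N u v s /\ odd (size s).

Definition unreach_v {A Q : finType} (F : A -> Q -> Prop) (v : A + Q) : Prop :=
  ~ even_v F v /\ ~ odd_v F v.

(* Instances.  Applicants A, posts P, ranks 1..r given by rk : A -> P ->*)
(* nat, where rk a p = 0 means "no edge" and rk a p = i >= 1 means p is *)
(* an i-th choice of a.  Last-resort posts: the post type of the        *)
(* extended instance is P + A, with l(a) = inr a of rank r+1 for a.     *)

Definition rkx {A P : finType} (r : nat) (rk : A -> P -> nat) (a : A) (p : P + A) : nat :=
  match p with
  | inl q => rk a q
  | inr b => if a == b then r.+1 else 0
  end.

Definition Eall {A P : finType} (r : nat) (rk : A -> P -> nat) (a : A) (p : P + A) : Prop :=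
  0 < rkx r rk a p.

(* one iteration i of Irving et al.'s algorithm: from (G'_i, R) where R
   is the set of not-yet-deleted edges of higher rank, produce
   (G'_{i+1}, R'). *)
Definition step {A P : finType} (r : nat) (rk : A -> P -> nat)
    (F R : A -> P + A -> Prop) (i : nat) : (A -> P + A -> Prop) * (A -> P + A -> Prop) :=
  let OU v := odd_v F v \/ unreach_v F v in
  let R' := fun a p => R a p /\ ~ (OU (inl a) \/ OU (inr p)) in
  let F' := fun a p =>
      (F a p /\ ~ ((odd_v F (inl a) /\ OU (inr p)) \/ (odd_v F (inr p) /\ OU (inl a))))
      \/ (R' a p /\ rkx r rk a p = i.+1) in
  (F', R').

(* stage k = (G'_{k+1}, remaining higher-rank edges) *)
Fixpoint stage {A P : finType} (r : nat) (rk : A -> P -> nat) (k : nat)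
    : (A -> P + A -> Prop) * (A -> P + A -> Prop) :=
  match k with
  | 0 => (fun a p => rkx r rk a p = 1, fun a p => is_true (1 < rkx r rk a p))
  | k'.+1 => step r rk (stage r rk k').1 (stage r rk k').2 k'.+1
  end.

(* Gp r rk k  is the graph G'_{k+1} *)
Definition Gp {A P : finType} (r : nat) (rk : A -> P -> nat) (k : nat) : A -> P + A -> Prop :=
  (stage r rk k).1.

Definition Gred {A P : finType} (r : nat) (rk : A -> P -> nat) (a : A) (p : P + A) : Prop :=
  let F := Gp r rk r in
  let OU v := odd_v F v \/ unreach_v F v in
  F a p /\ ~ ((odd_v F (inl a) /\ OU (inr p)) \/ (odd_v F (inr p) /\ OU (inl a))).

(* p \in E_1 \cap ... \cap E_{r+1} *)
Definition in_all_even {A P : finType} (r : nat) (rk : A -> P -> nat) (p : P + A) : Prop :=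
  forall k, k <= r -> even_v (Gp r rk k) (inr p).

Definition signature {A P : finType} (r : nat) (rk : A -> P -> nat)
    (M : {set A * (P + A)}) (i : nat) : nat :=
  #|[set e in M | rkx r rk e.1 e.2 == i]|.

Definition lex_gt {A P : finType} (r : nat) (rk : A -> P -> nat) (N M : {set A * (P + A)}) : Prop :=
  exists i, [/\ 1 <= i <= r.+1,
    (forall j, 1 <= j < i -> signature r rk N j = signature r rk M j) &
    signature r rk M i < signature r rk N i].

Definition rank_maximal {A P : finType} (r : nat) (rk : A -> P -> nat) (M : {set A * (P + A)}) : Prop :=
  is_matching (Eall r rk) M /\
  forall N, is_matching (Eall r rk) N -> ~ lex_gt r rk N M.

Definition swe {A P : finType} (r : nat) (rk : A -> P -> nat) (M : {set A * (P + A)})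
    (p p' : P + A) : Prop :=
  p <> p' /\ exists a, (a, p) \in M /\ Gred r rk a p'.

(* weight of the edge (p, p'): rank(a,p') - rank(a,p), a = M-partner of p *)
Definition swe_weight {A P : finType} (r : nat) (rk : A -> P -> nat) (M : {set A * (P + A)})
    (p p' : P + A) : int :=
  (\sum_(a | (a, p) \in M) ((rkx r rk a p')%:Z - (rkx r rk a p)%:Z))%R.

Definition is_sink {A P : finType} (r : nat) (rk : A -> P -> nat) (M : {set A * (P + A)})
    (p : P + A) : Prop :=
  (forall p', ~ swe r rk M p p') /\ in_all_even r rk p.

Definition gm_connected {A P : finType} (r : nat) (rk : A -> P -> nat) (M : {set A * (P + A)})
    (p q : P + A) : Prop :=
  clos_refl_sym_trans (P + A) (swe r rk M) p q.

Definition in_sink_comp {A P : finType} (r : nat) (rk : A -> P -> nat) (M : {set A * (P + A)})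
    (p : P + A) : Prop :=
  exists q, is_sink r rk M q /\ gm_connected r rk M p q.

Definition in_nonsink_comp {A P : finType} (r : nat) (rk : A -> P -> nat) (M : {set A * (P + A)})
    (p : P + A) : Prop :=
  forall q, gm_connected r rk M p q -> ~ is_sink r rk M q.

Definition dpath {A P : finType} (r : nat) (rk : A -> P -> nat) (M : {set A * (P + A)})
    (p q : P + A) (s : seq (P + A)) : Prop :=
  [/\ uniq (p :: s), last p s = q &
   forall i, i < size s -> swe r rk M (nth p (p :: s) i) (nth p (p :: s) i.+1)].

Definition dpath_weight {A P : finType} (r : nat) (rk : A -> P -> nat) (M : {set A * (P + A)})
    (p : P + A) (s : seq (P + A)) : int :=
  (\sum_(i < size s) swe_weight r rk M (nth p (p :: s) i) (nth p (p :: s) i.+1))%R.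

(* Main.v *)
Require Import Defs.
From mathcomp Require Import all_boot all_order all_algebra.
From Stdlib Require Import ClassicalEpsilon Classical Relations.
From mathcomp Require Import zify.
Set Implicit Arguments. Unset Strict Implicit. Unset Printing Implicit Defensive.

Definition pb (P : Prop) : bool := if excluded_middle_informative P then true else false.
Lemma pbP (P : Prop) : reflect P (pb P).
Proof. rewrite /pb; case: excluded_middle_informative => H; [left|right]; done. Qed.

Section Gen.
Variables (A Q : finType).
Implicit Types (N : {set A * Q}) (x y z w u v : A + Q) (e f : A * Q).

Definition isl x : bool := if x is inl _ then true else false.
Definition eg x y : option (A * Q) :=
  match x, y with
  | inl a, inr q => Some (a, q)
  | inr q, inl a => Some (a, q)
  | _, _ => None end.
Definition inc e x : bool := (x == inl e.1) || (x == inr e.2).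
Definition mate N := adj (fun a q => (a, q) \in N).

Lemma adjE (G : A -> Q -> Prop) x y : adj G x y <-> exists e, eg x y = Some e /\ G e.1 e.2.
Proof.
case: x => [a|q]; case: y => [b|q'] /=; split => //; try by case=> ? [].
- by move=> H; exists (a, q').
- by case=> e [[<-]].
- by move=> H; exists (b, q).
- by case=> e [[<-]].
Qed.

Lemma mateE N x y : mate N x y <-> exists e, eg x y = Some e /\ e \in N.
Proof. rewrite /mate adjE; split; case=> e [H1 H2]; exists e; split => //; by case: e H1 H2. Qed.

Lemma adj_sym (G : A -> Q -> Prop) x y : adj G x y -> adj G y x.
Proof. by case: x; case: y. Qed.

Lemma adj_side (G : A -> Q -> Prop) x y : adj G x y -> isl x = ~~ isl y.
Proof. by case: x; case: y. Qed.

Lemma adj_neq (G : A -> Q -> Prop) x y : adj G x y -> x <> y.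
Proof. by case: x; case: y => // ? ? ? ->. Qed.

Lemma eg_inc x y e : eg x y = Some e -> [/\ inc e x, inc e y & x != y].
Proof.
by case: x => [a|q]; case: y => [b|q'] //= [<-]; rewrite /inc /= !eqxx ?orbT.
Qed.

Lemma eg_incv x y e v : eg x y = Some e -> inc e v -> v = x \/ v = y.
Proof.
case: x => [a|q]; case: y => [b|q'] //= [<-]; rewrite /inc /= => /orP[] /eqP ->; auto.
Qed.

Lemma inc_eg e x y : inc e x -> inc e y -> x <> y -> eg x y = Some e.
Proof.
case: e => a q; rewrite /inc /= => /orP[] /eqP -> /orP[] /eqP -> //.
Qed.

Lemma matchingP (G : A -> Q -> Prop) N : is_matching G N <->
  (forall e, e \in N -> G e.1 e.2) /\ (forall e1 e2 v, e1 \in N -> e2 \in N -> inc e1 v -> inc e2 v -> e1 = e2).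
Proof.
split; case=> H1 H2; split => //.
- move=> e1 e2 v He1 He2; rewrite /inc => /orP[] /eqP -> /orP[] /eqP // [] H; apply: H2 => //; by [left|right].
- move=> e1 e2 He1 He2 [] H.
  + by apply: (H2 _ _ (inl e1.1)) => //; rewrite /inc H eqxx.
  + by apply: (H2 _ _ (inr e1.2)) => //; rewrite /inc H eqxx orbT.
Qed.

Lemma unmatchedE N x : unmatched N x <-> forall e, e \in N -> ~~ inc e x.
Proof.
case: x => [a|q] /=; split.
- move=> H [b q] He; rewrite /inc /= ?orbF; apply/negP => /eqP [] E; subst b.
  by move: (H q); rewrite He.
- by move=> H q; apply/negP => He; move: (H _ He); rewrite /inc /= eqxx.
- move=> H [b q'] He; rewrite /inc /= ?orbF; apply/negP => /eqP [] E; subst q'.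
  by move: (H b); rewrite He.
- by move=> H b; apply/negP => He; move: (H _ He); rewrite /inc /= eqxx ?orbT.
Qed.

Lemma unmatched_mate N x y : unmatched N x -> ~ mate N x y.
Proof.
move/unmatchedE => H /mateE [e [He1 He2]]; case: (eg_inc He1) => Hi _ _.
by move: (H _ He2); rewrite Hi.
Qed.

Lemma unmatchedP N x : unmatched N x <-> forall y, ~ mate N x y.
Proof.
split; first by move=> H y; apply: unmatched_mate.
case: x => [a|q] /= H.
- by move=> q; apply/negP => Hq; apply: (H (inr q)).
- by move=> a; apply/negP => Hq; apply: (H (inl a)).
Qed.

Lemma mate_sym N x y : mate N x y -> mate N y x.
Proof. exact: adj_sym. Qed.

Lemma mate_adj (G : A -> Q -> Prop) N x y : is_matching G N -> mate N x y -> adj G x y.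
Proof.
case=> H _; case: x => [a|q]; case: y => [b|q'] //= He.
- exact: (H (a, q') He).
- exact: (H (b, q) He).
Qed.

Lemma mate_uniq (G : A -> Q -> Prop) N x y z : is_matching G N -> mate N x y -> mate N x z -> y = z.
Proof.
move/matchingP => [_ H] /mateE [e1 [E1 N1]] /mateE [e2 [E2 N2]].
case: (eg_inc E1) => I1 _ _; case: (eg_inc E2) => I2 _ _.
have ee := H _ _ _ N1 N2 I1 I2; subst e2.
move: E1 E2; clear I1 I2 N1 N2 H; case: x => [a|q]; case: y => [b|q'] //; case: z => [c|q''] //= ; congruence.
Qed.

Lemma swap (G : A -> Q -> Prop) N x y w : is_matching G N -> mate N x y -> unmatched N w -> adj G w x ->
  exists e1 e2, [/\ eg x y = Some e1, e1 \in N, eg w x = Some e2, e2 \notin N &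
   [/\ is_matching G (e2 |: (N :\ e1)), #|e2 |: (N :\ e1)| = #|N|, unmatched (e2 |: (N :\ e1)) y,
     mate (e2 |: (N :\ e1)) w x &
     forall p q, p <> x -> q <> x -> (mate (e2 |: (N :\ e1)) p q <-> mate N p q)]].
Proof.
move=> HN /mateE [e1 [E1 N1]] Hw /adjE [e2 [E2 G2]].
have Hw' := (proj1 (unmatchedE _ _) Hw).
case: (eg_inc E1) => I1x I1y nxy; case: (eg_inc E2) => I2w I2x nwx.
have n2 : e2 \notin N by apply/negP => H; move: (Hw' _ H); rewrite I2w.
have ne12 : e1 != e2 by apply/eqP => E; move: n2; rewrite -E N1.
move/matchingP: (HN) => [HG HD].
exists e1, e2; split => //.
have HN1 : is_matching G (e2 |: (N :\ e1)).
  apply/matchingP; split.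
  - by move=> e; rewrite !inE => /orP[/eqP ->|/andP[_ /HG]].
  - move=> f1 f2 v; rewrite !inE => /orP[/eqP ->|/andP[nf1 f1N]] /orP[/eqP ->|/andP[nf2 f2N]] // i1 i2.
    + case: (eg_incv E2 i1) => Ev; subst v.
      * by move: (Hw' _ f2N); rewrite i2.
      * by move/eqP: nf2; case; apply: (HD _ _ x).
    + case: (eg_incv E2 i2) => Ev; subst v.
      * by move: (Hw' _ f1N); rewrite i1.
      * by move/eqP: nf1; case; apply: (HD _ _ x).
    + exact: (HD _ _ v).
split => //.
- rewrite cardsU1 !inE negb_and n2 orbT /= (cardsD1 e1 N) N1 /=; by [].
- apply/unmatchedE => f; rewrite !inE => /orP[/eqP ->|/andP[nf fN]].
  + apply/negP => i; case: (eg_incv E2 i) => E.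
    * by subst; move: (Hw' _ N1); rewrite I1y.
    * by subst; move/eqP: nxy.
  + by apply/negP => i; move/eqP: nf; apply; apply: (HD _ _ y).
- by apply/mateE; exists e2; rewrite !inE eqxx.
- move=> p q np nq; split => /mateE [e [Ee He]]; apply/mateE; exists e; split => //;
  case: (eg_inc Ee) => ip iq npq.
  + move: He; rewrite !inE => /orP[/eqP E|/andP[]//]; subst e.
    case: (eg_incv E2 ip) => Ep; last by [].
    case: (eg_incv E2 iq) => Eq; last by []. by subst; move/eqP: npq.
  + rewrite !inE He andbT; apply/orP; right; apply/eqP => E; subst e.
    case: (eg_incv E1 ip) => Ep; first by [].
    case: (eg_incv E1 iq) => Eq; first by []. by subst; move/eqP: npq.
Qed.

Lemma augment (G : A -> Q -> Prop) N x w : is_matching G N -> unmatched N x -> unmatched N w -> adj G w x ->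
  exists N1, is_matching G N1 /\ #|N1| = #|N|.+1.
Proof.
move=> HN Hx Hw /adjE [e [E Ge]].
have Hw' := (proj1 (unmatchedE _ _) Hw); have Hx' := (proj1 (unmatchedE _ _) Hx).
case: (eg_inc E) => Iw Ix _.
have ne : e \notin N by apply/negP => H; move: (Hw' _ H); rewrite Iw.
move/matchingP: HN => [HG HD].
exists (e |: N); split; last by rewrite cardsU1 ne.
apply/matchingP; split.
- by move=> f; rewrite !inE => /orP[/eqP ->|/HG].
- move=> f1 f2 v; rewrite !inE => /orP[/eqP ->|f1N] /orP[/eqP ->|f2N] // i1 i2.
  + by case: (eg_incv E i1) => Ev; subst v; [move: (Hw' _ f2N); rewrite i2|move: (Hx' _ f2N); rewrite i2].
  + by case: (eg_incv E i2) => Ev; subst v; [move: (Hw' _ f1N); rewrite i1|move: (Hx' _ f1N); rewrite i1].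
  + exact: (HD _ _ v).
Qed.

End Gen.

Section Paths.
Variables (A Q : finType) (G : A -> Q -> Prop).
Implicit Types (N : {set A * Q}) (x y z w u v : A + Q) (e f : A * Q) (s : seq (A + Q)).

Fixpoint altok N x (b : bool) s : Prop :=
  match s with
  | [::] => True
  | y :: s' => [/\ adj G x y, (mate N x y <-> b) & altok N y (~~ b) s']
  end.

Lemma altok_nth N x b s : altok N x b s <->
  forall i, i < size s -> adj G (nth x (x :: s) i) (nth x (x :: s) i.+1) /\
     (mate N (nth x (x :: s) i) (nth x (x :: s) i.+1) <-> b (+) odd i).
Proof.
elim: s x b => [|y s IH] x b /=; first by split.
split.
- case=> H1 H2 /IH H3 [|i] /= Hi; first by rewrite addbF.
  have Hi' : i < size (y :: s) by rewrite /= ltnW.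
  rewrite (set_nth_default y x Hi').
  have Hi'' : i < size s by [].
  rewrite (set_nth_default y x Hi'').
  case: (H3 i Hi) => /= H4 H5; split => //; by rewrite addbN -addNb.
- move=> H; case: (H 0 erefl) => H1 H2; split => //; first by rewrite addbF in H2.
  apply/IH => i Hi; have Hi2 : i.+1 < (size s).+1 by [].
  case: (H i.+1 Hi2) => /=.
  have Hi' : i < size (y :: s) by rewrite /= ltnW.
  rewrite (set_nth_default y x Hi').
  have Hi'' : i < size s by [].
  rewrite (set_nth_default y x Hi'') => H3 H4; split => //; by rewrite addNb -addbN.
Qed.

Lemma alt_pathE N u v s : alt_path G N u v s <->
  [/\ unmatched N u, uniq (u :: s), last u s = v & altok N u false s].
Proof.
rewrite /alt_path; split; case=> H1 H2 H3 H4; split => //.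
- by apply/altok_nth => i Hi; rewrite addFb; apply: H4.
- by move/altok_nth: H4 => H4 i Hi; rewrite -(addFb (odd i)); apply: H4.
Qed.

Lemma altok_cat N x b s1 s2 : altok N x b (s1 ++ s2) <->
  altok N x b s1 /\ altok N (last x s1) (b (+) odd (size s1)) s2.
Proof.
elim: s1 x b => [|y s1 IH] x b /=; first by rewrite addbF; split => // [[]].
split.
- by case=> H1 H2 /IH [H3 H4]; split => //; rewrite addbN -addNb.
- by case=> [[H1 H2 H3] H4]; split => //; apply/IH; split => //; rewrite addbN -addNb in H4.
Qed.

Lemma altok_side N x b s : altok N x b s -> isl (last x s) = isl x (+) odd (size s).
Proof.
elim: s x b => [|y s IH] x b /=; first by rewrite addbF.
case=> H1 _ H3; rewrite (IH _ _ H3) (adj_side H1).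
by case: (isl y); case: (odd (size s)).
Qed.

Lemma altok_split N x b s1 z s2 : altok N x b (s1 ++ z :: s2) ->
  [/\ altok N x b (rcons s1 z), adj G (last x s1) z, (mate N (last x s1) z <-> b (+) odd (size s1)) &
      altok N z (~~ (b (+) odd (size s1))) s2].
Proof.
move/altok_cat => [H1 /= [H2 H3 H4]]; split => //.
by rewrite -cats1; apply/altok_cat; split => //=.
Qed.

End Paths.

Section Match.
Variables (A Q : finType) (G : A -> Q -> Prop).
Implicit Types (N : {set A * Q}) (x y z w u v : A + Q) (e f : A * Q) (s : seq (A + Q)).

Definition D v := exists N, is_max_matching G N /\ unmatched N v.

Lemma altok_congr N N1 x b s : (forall p q, p \in x :: s -> q \in x :: s -> (mate N1 p q <-> mate N p q)) ->
  altok G N x b s -> altok G N1 x b s.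
Proof.
elim: s x b => [|y s IH] x b //= H [H1 H2 H3]; split => //.
- by rewrite H // ?mem_head // inE mem_head orbT.
- apply: IH => // p q Hp Hq; apply: H; by rewrite inE ?Hp ?Hq orbT.
Qed.

Lemma notunmatched N x : ~ unmatched N x -> exists y, mate N x y.
Proof.
move=> H; apply: NNPP => H1; apply: H; apply/unmatchedP => y Hy; apply: H1; by exists y.
Qed.

Lemma flip_path n : forall s N u, size s <= n -> is_matching G N -> unmatched N u -> altok G N u false s ->
  uniq (u :: s) ->
  (if odd (size s) then unmatched N (last u s) -> exists N', is_matching G N' /\ #|N'| = #|N|.+1
   else exists N', [/\ is_matching G N', #|N'| = #|N| & unmatched N' (last u s)]).
Proof.
elim: n => [|n IH] [|y [|v s]] N u //= Hs HN Hu Hal Hun.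
- by exists N.
- by exists N.
- move=> Hy; case: Hal => H1 _ _; exact: (augment HN Hy Hu H1).
- case: Hal => H1 H2 [H3 H4 H5].
  have Hm : mate N y v by apply/H4.
  case: (swap HN Hm Hu H1) => e1 [e2 [E1 N1 E2 N2 [HN1 C1 U1 M1 Eq1]]].
  set N1' := e2 |: (N :\ e1) in HN1 C1 U1 M1 Eq1.
  move: Hun; rewrite !inE !negb_or => /and3P [/and3P [nuy nuv nus] /andP [nyv nys] Hun].
  have Hal' : altok G N1' v false s.
    apply: altok_congr H5 => p q Hp Hq; apply: Eq1.
    + by move=> E; subst p; move: Hp; rewrite inE (negbTE nyv) (negbTE nys).
    + by move=> E; subst q; move: Hq; rewrite inE (negbTE nyv) (negbTE nys).
  have := IH s N1' v (ltnW (ltnSE Hs)) HN1 U1 Hal' Hun.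
  rewrite negbK; case: (odd (size s)).
  + move=> H Hl; have [N' [HN' C']] : exists N', is_matching G N' /\ #|N'| = #|N1'|.+1.
      apply: H; apply/unmatchedP => q Hq.
      have Hl' : last v s \in v :: s by apply: mem_last.
      have nly : last v s <> y by move=> E; move: Hl'; rewrite E inE (negbTE nyv) (negbTE nys).
      case: (eqVneq q y) => [E|nqy].
      * subst q; have := mate_uniq HN1 (mate_sym Hq) (mate_sym M1) => E.
        by move: Hl'; rewrite E inE (negbTE nuv) (negbTE nus).
      * move/Eq1: Hq; have nqy' : q <> y by apply/eqP.
        move=> /(_ nly nqy'); exact: unmatched_mate Hl.
    by exists N'; rewrite C' C1.
  + move=> [N' [HN' C' U']]; by exists N'; split => //; rewrite C'.
Qed.

Lemma even_D v : even_v G v -> D v.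
Proof.
case=> N [u [s [[HN Hmax] [/alt_pathE [Hu Hun Hl Hal] Hev]]]].
have := flip_path (leqnn (size s)) HN Hu Hal Hun; rewrite (negbTE Hev) Hl.
case=> N' [HN' C' U']; exists N'; split => //; split => // N'' H; rewrite C'; exact: Hmax.
Qed.

Lemma D_even v : D v -> even_v G v.
Proof.
case=> N [HN Hv]; exists N, v, [::]; split => //; split => //.
Qed.

Lemma aug_path N u s : is_max_matching G N -> alt_path G N u (last u s) s -> odd (size s) ->
  unmatched N (last u s) -> False.
Proof.
case=> HN Hmax /alt_pathE [Hu Hun _ Hal] Ho Hl.
have := flip_path (leqnn (size s)) HN Hu Hal Hun; rewrite Ho => /(_ Hl) [N' [HN' C']].
by have := Hmax _ HN'; rewrite C' ltnn.
Qed.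

Lemma path_matched N u s z : is_matching G N -> altok G N u false s -> ~~ odd (size s) -> z \in s ->
  exists z', mate N z z' /\ z' \in u :: s.
Proof.
move=> HN Hal Hev Hz; case/splitPr: Hz Hal Hev => s1 s2 Hal Hev.
case/altok_split: Hal => _ H1 H2 H3.
case Ho: (odd (size s1)).
- exists (last u s1); split; first by apply: mate_sym; apply/H2.
  by rewrite -cat_cons mem_cat mem_last.
- move: Hev H3; rewrite size_cat /= Ho /=; case: s2 => [|z' s2] /=; first by rewrite addn1 /= Ho.
  move=> _ [_ H4 _]; exists z'; split; first by apply/H4.
  by rewrite inE mem_cat !inE eqxx !orbT.
Qed.

Lemma alt_prefix N u v s z : alt_path G N u v s -> z \in u :: s ->
  exists s', alt_path G N u z s' /\ isl z = isl u (+) odd (size s').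
Proof.
move=> /alt_pathE [Hu Hun Hl Hal]; rewrite inE => /orP [/eqP ->|Hz].
- exists [::]; split; last by rewrite addbF.
  by apply/alt_pathE; split.
- case/splitPr: Hz Hun Hal Hl => s1 s2 Hun Hal _.
  case/altok_split: (Hal) => H1 _ _ _.
  exists (rcons s1 z); split; last by rewrite -{1}(last_rcons u s1 z); exact: altok_side H1.
  apply/alt_pathE; split => //; last by rewrite last_rcons.
  move: Hun; rewrite -cat_cons cat_uniq => /and3P [H4 H5 H6].
  rewrite -rcons_cons rcons_uniq H4 andbT.
  by apply/negP => Hz; move: H5; rewrite /= Hz.
Qed.

Lemma D_path v : D v -> forall N, is_max_matching G N ->
  exists u s, alt_path G N u v s /\ ~~ odd (size s).
Proof.
move=> HD N HNm; case: (HNm) => HN Hmax.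
suff: forall n N2 v, #|N :\: N2| < n -> is_max_matching G N2 -> unmatched N2 v ->
  exists u s, alt_path G N u v s /\ ~~ odd (size s).
  by case: HD => N2 [H1 H2] H; apply: (H _ N2 v (ltnSn _) H1 H2).
elim => [|n IH] N2 {HD}v Hn [HN2 Hmax2] Hv2 //.
case: (classic (unmatched N v)) => [Hv|Hv].
  by exists v, [::]; split => //; apply/alt_pathE; split.
case: (notunmatched Hv) => x1 Hx1.
have Ha1 : adj G v x1 by exact: mate_adj HN Hx1.
case: (classic (unmatched N2 x1)) => [Hu1|Hu1].
  by case: (augment HN2 Hu1 Hv2 Ha1) => N' [HN' C']; have := Hmax2 _ HN'; rewrite C' ltnn.
case: (notunmatched Hu1) => x2 Hx2.
case: (swap HN2 Hx2 Hv2 Ha1) => e1 [e2 [E1 N1 E2 N2e [HN1 C1 U1 M1 Eq1]]].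
set N2' := e2 |: (N2 :\ e1) in HN1 C1 U1 M1 Eq1.
have e2N : e2 \in N by case/mateE: Hx1 => e [E He]; rewrite E2 in E; case: E => ->.
have e1N : e1 \notin N.
  apply/negP => He1; have Hm : mate N x1 x2 by apply/mateE; exists e1.
  have := mate_uniq HN Hm (mate_sym Hx1) => E; subst x2; exact: unmatched_mate Hv2 (mate_sym Hx2).
have Hsub : N :\: N2' \proper N :\: N2.
  apply/properP; split.
  - apply/subsetP => f; rewrite !inE negb_or => /andP [/andP [nf2 H] fN]; rewrite fN andbT.
    case/nandP: H => [/negbNE /eqP E|->] //; by subst f; rewrite fN in e1N.
  - by exists e2; [rewrite !inE e2N N2e|rewrite !inE eqxx].
have Hn' : #|N :\: N2'| < n by rewrite -ltnS; apply: leq_trans Hn; exact: proper_card.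
have HN2' : is_max_matching G N2' by split => // N' H; rewrite C1; exact: Hmax2.
case: (IH N2' x2 Hn' HN2' U1) => u [s [Hp Hev]].
have Hsx2 : isl x2 = isl v by rewrite (adj_side Ha1) (adj_side (mate_adj HN2 Hx2)) negbK.
have Hpp := Hp; case/alt_pathE: Hpp => Hu Hun Hl Hal.
have Hsu : isl x2 = isl u by rewrite -Hl (altok_side Hal) (negbTE Hev) addbF.
case: (boolP (v \in u :: s)) => Hvin.
  case: (alt_prefix Hp Hvin) => s' [Hp' Hs']; exists u, s'; split => //.
  by move: Hs'; rewrite -Hsx2 Hsu; case: (odd (size s')) => //; case: (isl u).
have Hx1n : x1 \notin u :: s.
  rewrite inE; apply/negP => /orP [/eqP E|Hx1s].
  - by subst u; exact: unmatched_mate Hu (mate_sym Hx1).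
  - case: (path_matched HN Hal Hev Hx1s) => z' [Hz' Hz'in].
    have := mate_uniq HN Hz' (mate_sym Hx1) => E; subst z'; by rewrite Hz'in in Hvin.
exists u, (s ++ [:: x1; v]); split; last by rewrite size_cat /= addn2 /= negbK.
apply/alt_pathE; split => //.
- rewrite -cat_cons cat_uniq Hun /= (negbTE Hx1n) (negbTE Hvin) /= inE andbT.
  by apply/negP => /eqP E; subst x1; move: (adj_neq Ha1).
- by rewrite last_cat.
- apply/altok_cat; split => //; rewrite Hl (negbTE Hev) /=; split.
  + exact: adj_sym (mate_adj HN2 Hx2).
  + split => // Hm; have := mate_uniq HN (mate_sym Hm) (mate_sym Hx1) => E.
    by move: Hvin; rewrite -E -Hl mem_last.

  + split => //; [exact: adj_sym Ha1|split => // _; exact: mate_sym Hx1].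
Qed.

End Match.

Section Facts.
Variables (A Q : finType) (G : A -> Q -> Prop).
Implicit Types (N : {set A * Q}) (x y z w u v : A + Q) (e f : A * Q) (s : seq (A + Q)).

Lemma D_indep x y : adj G x y -> D G x -> D G y -> False.
Proof.
move=> Hxy Hx [N [HNm Hy]]; case: (HNm) => HN _.
case: (D_path Hx HNm) => u [s [Hp Hev]].
have Hpp := Hp; case/alt_pathE: Hpp => Hu Hun Hl Hal.
case: (boolP (y \in u :: s)) => Hyin.
- move: Hyin; rewrite inE => /orP [/eqP E|Hys].
  + subst u; move: (altok_side Hal); rewrite Hl (negbTE Hev) addbF (adj_side Hxy).
    by case: (isl y).
  + case: (path_matched HN Hal Hev Hys) => z' [Hz' _]; exact: unmatched_mate Hy Hz'.
- apply: (@aug_path _ _ G N u (rcons s y) HNm); last 2 first.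
  + by rewrite size_rcons /= Hev.
  + by rewrite last_rcons.
  + rewrite last_rcons; apply/alt_pathE; split => //.
    * by rewrite -rcons_cons rcons_uniq Hyin Hun.
    * by rewrite last_rcons.
    * rewrite -cats1; apply/altok_cat; split => //; rewrite Hl (negbTE Hev) /=; split => //.
      split => // Hm; by case: (unmatched_mate Hy (mate_sym Hm)).
Qed.

Lemma odd_intro x w : adj G x w -> D G w -> odd_v G x.
Proof.
move=> Hxw [N [HNm Hw]]; exists N, w, [:: x]; split => //; split => //.
apply/alt_pathE; split => //.
- rewrite /= inE andbT; apply/negP => /eqP E; subst w; by case: (adj_neq Hxw).
- by split => //; [exact: adj_sym|split => // Hm; by case: (unmatched_mate Hw Hm)].
Qed.

Lemma odd_elim x : odd_v G x -> exists w, D G w /\ adj G w x.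
Proof.
case=> N [u [s [HNm [Hp Ho]]]].
have Hpp := Hp; case/alt_pathE: Hpp => Hu Hun Hl Hal.
case/lastP: s Hp Ho Hun Hl Hal => [|s0 y] Hp Ho Hun Hl Hal //.
rewrite last_rcons in Hl; subst y.
move: Hal; rewrite -cats1 => /altok_cat [H1 /= [H2 _ _]].
exists (last u s0); split => //.
have Hin' : last u s0 \in u :: rcons s0 x by rewrite -cats1 -cat_cons mem_cat mem_last.
case: (alt_prefix Hp Hin') => s' [Hp' Hs'].
apply: even_D; exists N, u, s'; split => //; split => //.
move: Hs' Ho; rewrite (altok_side H1) size_rcons /=.
by case: (odd (size s0)); case: (odd (size s')); case: (isl u).
Qed.

Lemma odd_notD x : odd_v G x -> ~ D G x.
Proof. move=> /odd_elim [w [Hw Hwx]] Hx; exact: D_indep Hwx Hw Hx. Qed.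

Lemma mate_odd N x y : is_max_matching G N -> mate N x y -> odd_v G x -> D G y.
Proof.
move=> HNm Hxy Hx; case: (HNm) => HN _.
case: (odd_elim Hx) => w [Hw Hwx].
case: (classic (mate N w x)) => Hm.
  by rewrite (mate_uniq HN Hxy (mate_sym Hm)).
case: (D_path Hw HNm) => u [s [Hp Hev]].
have Hpp := Hp; case/alt_pathE: Hpp => Hu Hun Hl Hal.
have Hsu : isl w = isl u by rewrite -Hl (altok_side Hal) (negbTE Hev) addbF.
have Hsy : isl y = isl w by rewrite (adj_side Hwx) (adj_side (mate_adj HN Hxy)) negbK.
case: (boolP (y \in u :: s)) => Hyin.
  case: (alt_prefix Hp Hyin) => s' [Hp' Hs']; apply: even_D; exists N, u, s'; split => //; split => //.
  by move: Hs'; rewrite Hsy Hsu; case: (odd (size s')) => //; case: (isl u).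
have Hxn : x \notin u :: s.
  rewrite inE; apply/negP => /orP [/eqP E|Hxs].
  - by subst u; exact: unmatched_mate Hu Hxy.
  - case: (path_matched HN Hal Hev Hxs) => z' [Hz' Hz'in].
    have := mate_uniq HN Hz' Hxy => E; subst z'; by rewrite Hz'in in Hyin.
apply: even_D; exists N, u, (s ++ [:: x; y]); split => //; split; last by rewrite size_cat /= addn2 /= negbK.
apply/alt_pathE; split => //.
- rewrite -cat_cons cat_uniq Hun /= (negbTE Hxn) (negbTE Hyin) /= inE andbT.
  by apply/negP => /eqP E; subst y; by case: (adj_neq (mate_adj HN Hxy)).
- by rewrite last_cat.
- apply/altok_cat; split => //; rewrite Hl (negbTE Hev) /=; split.
  + exact: Hwx.
  + by split => // H; case: Hm.
  + split => //; exact: mate_adj HN Hxy.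
Qed.

Lemma berge N1 N2 : is_matching G N1 -> is_matching G N2 -> #|N1| < #|N2| ->
  exists N3, [/\ is_matching G N3, #|N1| < #|N3| & forall v, ~ unmatched N1 v -> ~ unmatched N3 v].
Proof.
move=> HN1; move: {2}#|N1 :\: N2|.+1 (ltnSn #|N1 :\: N2|) => n.
elim: n N2 => [|n IH] N2 Hn HN2 Hlt //.
case: (classic (forall v, ~ unmatched N1 v -> ~ unmatched N2 v)) => Hall; first by exists N2.
have [v [Hv1 Hv2]] : exists v, ~ unmatched N1 v /\ unmatched N2 v.
  apply: NNPP => H; apply: Hall => v Hv1 Hv2; apply: H; by exists v.
have [e [eN1 iev]] : exists e, e \in N1 /\ inc e v.
  apply: NNPP => H; apply: Hv1; apply/unmatchedE => e He; apply/negP => Hi; apply: H; by exists e.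
have eN2 : e \notin N2.
  apply/negP => H; by move: ((proj1 (unmatchedE _ _) Hv2) _ H); rewrite iev.
move/matchingP: (HN1) => [HG1 HD1]; move/matchingP: (HN2) => [HG2 HD2].
set S := [set f in N2 | (f.1 == e.1) || (f.2 == e.2)].
have shareS : forall f, f \in N2 -> (exists v', inc f v' && inc e v') -> f \in S.
  move=> f fN [v' /andP [i1 i2]]; rewrite !inE fN /=.
  move: i1 i2; rewrite /inc => /orP [] /eqP -> /orP [] /eqP // [] ->; by rewrite eqxx ?orbT.
have Sinc : forall f, f \in S -> exists v', inc f v' && inc e v'.
  move=> f; rewrite !inE => /andP [_ /orP [] /eqP E]; [exists (inl e.1)|exists (inr e.2)];
  by rewrite /inc E eqxx ?orbT.
have SN : forall f, f \in S -> f \in N2 by move=> f; rewrite inE => /andP [].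
have S1 : #|S| <= 1.
  apply/card_le1_eqP => f f' Hf Hf'.
  case: (Sinc _ Hf) => v1 /andP [i1 j1]; case: (Sinc _ Hf') => v2 /andP [i2 j2].
  have fN := SN _ Hf; have fN' := SN _ Hf'.
  case: (eqVneq v1 v2) => [E|n12]; first by subst v2; rewrite (HD2 _ _ v1 fN fN' i1 i2).
  exfalso; case: (eqVneq v1 v) => [E1|n1].
    by subst v1; move: ((proj1 (unmatchedE _ _) Hv2) _ fN); rewrite i1.
  case: (eqVneq v2 v) => [E2|n2].
    by subst v2; move: ((proj1 (unmatchedE _ _) Hv2) _ fN'); rewrite i2.
  move: j1 j2 iev n12 n1 n2; rewrite /inc; case: (e) => a q /=.
  by do 3 (case/orP => /eqP ->); rewrite ?eqxx.
set N2' := e |: (N2 :\: S).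
have HN2' : is_matching G N2'.
  apply/matchingP; split.
  - by move=> f; rewrite !(in_setU1, in_setD) => /orP [/eqP ->|/andP [_ /HG2]]; [apply: HG1|].
  - move=> f1 f2 v'; rewrite !(in_setU1, in_setD) => /orP [/eqP ->|/andP [nS1 f1N]] /orP [/eqP ->|/andP [nS2 f2N]] // i1 i2.
    + by move: nS2; rewrite (shareS _ f2N) //; exists v'; rewrite i1 i2.
    + by move: nS1; rewrite (shareS _ f1N) //; exists v'; rewrite i1 i2.
    + exact: HD2 _ _ v' f1N f2N i1 i2.
have C2' : #|N2| <= #|N2'|.
  rewrite /N2' cardsU1 !inE negb_and eN2 orbT /= cardsDS; last by apply/subsetP.
  have : #|S| <= #|N2| by apply: subset_leq_card; apply/subsetP.
  move: S1; case: #|S| => [|[|]] //= _; rewrite ?subn0 ?subn1 //.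
  by case: #|N2|.
have Hsub : N1 :\: N2' \proper N1 :\: N2.
  apply/properP; split.
  - apply/subsetP => f; rewrite !(in_setU1, in_setD) negb_or => /andP [/andP [nfe H] fN1]; rewrite fN1 andbT.
    case/nandP: H => [/negbNE fS|->] //.
    case: (Sinc _ fS) => v' /andP [i1 i2]; move/eqP: nfe; case; exact: HD1 _ _ v' fN1 eN1 i1 i2.
  - exists e; [by rewrite !inE eN1 eN2|by rewrite !inE eqxx].
have Hn' : #|N1 :\: N2'| < n by rewrite -ltnS; apply: leq_trans Hn; exact: proper_card.
exact: IH N2' Hn' HN2' (leq_trans Hlt C2').
Qed.

End Facts.

Section Stages.
Variables (A P : finType) (r : nat) (rk : A -> P -> nat).
Hypothesis Hrk : forall a p, rk a p <= r.

Local Notation F k := (Gp r rk k).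
Local Notation Rs k := (stage r rk k).2.
Local Notation rkx := (rkx r rk).
Local Notation ev k v := (even_v (Gp r rk k) v).
Local Notation od k v := (odd_v (Gp r rk k) v).
Definition OU k v := odd_v (Gp r rk k) v \/ unreach_v (Gp r rk k) v.
Definition del k a p := (odd_v (Gp r rk k) (inl a) /\ OU k (inr p)) \/ (odd_v (Gp r rk k) (inr p) /\ OU k (inl a)).

Lemma Fsucc k a p : F k.+1 a p <-> (F k a p /\ ~ del k a p) \/ (Rs k.+1 a p /\ rkx a p = k.+2).
Proof. by []. Qed.

Lemma Rsucc k a p : Rs k.+1 a p <-> Rs k a p /\ ~ (OU k (inl a) \/ OU k (inr p)).
Proof. by []. Qed.

Lemma OU_iff k v : OU k v <-> ~ ev k v.
Proof.
split.
- case=> [Ho|[Hu _]] // He; apply: (odd_notD Ho); exact: even_D He.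
- move=> He; case: (classic (od k v)) => Ho; [by left|by right].
Qed.

Lemma rkx_le a p : rkx a p <= r.+1.
Proof. by case: p => [q|b] /=; [apply: leqW|case: eqP]. Qed.

Lemma F_rk k a p : F k a p -> 0 < rkx a p <= k.+1.
Proof.
elim: k => [|k IH]; first by move=> /= ->.
move/Fsucc => [[H _]|[_ ->]]; last by rewrite leqnn.
by case/andP: (IH H) => H1 H2; rewrite H1 (leq_trans H2).
Qed.

Lemma Rs_rk k a p : Rs k a p -> 1 < rkx a p.
Proof. elim: k => [|k IH] //=; by case=> /IH. Qed.

Lemma Rs_mono k m a p : k <= m -> Rs m a p -> Rs k a p.
Proof.
move=> /subnK <-; elim: (m - k) => [|d IH] //; rewrite addSn => /Rsucc [H _]; exact: IH.
Qed.

Lemma Rs_ok k a p : Rs k.+1 a p -> ~ OU k (inl a) /\ ~ OU k (inr p).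
Proof. by case=> _ H; split => H1; apply: H; [left|right]. Qed.

Lemma L_down k m a p : k < m -> F m a p ->
  (rkx a p <= k.+1 -> F k a p /\ ~ del k a p) /\ (k.+1 < rkx a p -> ~ OU k (inl a) /\ ~ OU k (inr p)).
Proof.
move=> /subnK <-; elim: (m - k.+1) => [|d IH].
- rewrite add0n => /Fsucc [[H1 H2]|[H1 H2]]; split => // H.
  + by move: (F_rk H1) => /andP [_ H3]; move: (leq_ltn_trans H3 H); rewrite ltnn.
  + by move: H; rewrite H2 ltnn.
  + exact: Rs_ok.
- rewrite addSn => /Fsucc [[H1 H2]|[H1 H2]]; first exact: IH.
  split => H; first by move: H; rewrite H2; lia.
  apply: Rs_ok; apply: (Rs_mono _ H1); lia.
Qed.

Lemma Gred_F a p : Gred r rk a p -> F r a p /\ ~ del r a p.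
Proof. by []. Qed.

Lemma Gred_down k a p : k <= r -> Gred r rk a p ->
  (rkx a p <= k.+1 -> F k a p /\ ~ del k a p) /\ (k.+1 < rkx a p -> ~ OU k (inl a) /\ ~ OU k (inr p)).
Proof.
rewrite leq_eqVlt => /orP [/eqP ->|Hk] /Gred_F [H1 H2].
- split => // H; by move: (F_rk H1) => /andP [_ H3]; move: (leq_ltn_trans H3 H); rewrite ltnn.
- exact: L_down Hk H1.
Qed.

End Stages.

Lemma sub_matching (A Q : finType) (G G' : A -> Q -> Prop) (X Y : {set A * Q}) :
  is_matching G Y -> X \subset Y -> (forall e, e \in X -> G' e.1 e.2) -> is_matching G' X.
Proof.
move=> [_ H] /subsetP Hs HG; split => // e1 e2 H1 H2; apply: H; exact: Hs.
Qed.

Lemma unmatched_sub (A Q : finType) (X Y : {set A * Q}) v : X \subset Y -> unmatched Y v -> unmatched X v.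
Proof.
move=> /subsetP Hs /unmatchedE H; apply/unmatchedE => e He; apply: H; exact: Hs.
Qed.

Lemma covered_inc (A Q : finType) (X : {set A * Q}) v : ~ unmatched X v -> exists e, e \in X /\ inc e v.
Proof.
move=> H; apply: NNPP => H1; apply: H; apply/unmatchedE => e He; apply/negP => Hi; apply: H1; by exists e.
Qed.

Section Irving.
Variables (A P : finType) (r : nat) (rk : A -> P -> nat).
Hypothesis Hrk : forall a p, rk a p <= r.
Variable M : {set A * (P + A)}.
Hypothesis HM : rank_maximal r rk M.

Local Notation F k := (Gp r rk k).
Local Notation rkx := (rkx r rk).
Local Notation ev k v := (even_v (Gp r rk k) v).
Local Notation od k v := (odd_v (Gp r rk k) v).

Definition Mk k := [set e in M | rkx e.1 e.2 <= k.+1].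
Definition Lc j (X : {set A * (P + A)}) := #|[set e in X | rkx e.1 e.2 <= j]|.

Lemma Lc_sig j (X : {set A * (P + A)}) : Lc j.+1 X = Lc j X + signature r rk X j.+1.
Proof.
rewrite /Lc /signature -(cardsID [set e : A * (P + A) | rkx e.1 e.2 <= j] [set e in X | rkx e.1 e.2 <= j.+1]).
congr (_ + _); apply: eq_card => e; rewrite !inE; case: (e \in X); rewrite /= ?andbF //; apply/idP/idP; lia.
Qed.

Lemma Lc_all j (X : {set A * (P + A)}) : (forall e, e \in X -> rkx e.1 e.2 <= j) -> Lc j X = #|X|.
Proof. move=> H; rewrite /Lc; apply: eq_card => e; rewrite !inE; by case: (boolP (e \in X)) => // /H ->. Qed.

Lemma Lc0 (X : {set A * (P + A)}) : is_matching (Eall r rk) X -> Lc 0 X = 0.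
Proof.
move=> [H _]; apply/eqP; rewrite cards_eq0; apply/eqP/setP => e; rewrite !inE.
case: (boolP (e \in X)) => //= /H; rewrite /Eall => H1; by rewrite leqNgt H1.
Qed.

Lemma lex_from_L N i : is_matching (Eall r rk) N -> 0 < i <= r.+1 ->
  (forall j, j < i -> Lc j N = Lc j M) -> Lc i M < Lc i N -> False.
Proof.
move=> HN Hi Heq Hlt; case: HM => _ H; apply: (H N HN); exists i; split => //.
- move=> j /andP [Hj1 Hj2]; case: j Hj1 Hj2 => // j _ Hj.
  have := Lc_sig j N; have := Lc_sig j M; rewrite (Heq j.+1 Hj) (Heq j (ltnW Hj)); lia.
- case: i Hi Heq Hlt => // i _ Heq; rewrite !Lc_sig (Heq i (ltnSn i)); lia.
Qed.

Lemma M_rk e : e \in M -> 0 < rkx e.1 e.2 <= r.+1.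
Proof. case: HM => [[H _] _] /H; rewrite /Eall => ->; exact: rkx_le. Qed.

Lemma Mk_r : Mk r = M.
Proof. apply/setP => e; rewrite !inE; case: (boolP (e \in M)) => //= /M_rk /andP [_ ->] //. Qed.

Lemma Mk_sub k : Mk k \subset M.
Proof. by apply/subsetP => e; rewrite inE => /andP []. Qed.

Lemma Mk_mono j k : j <= k -> Mk j \subset Mk k.
Proof. move=> H; apply/subsetP => e; rewrite !inE => /andP [-> /= H2]; lia. Qed.

Lemma M_cover a : ~ unmatched M (inl a).
Proof.
move=> Ha; case: HM => [HMm _].
have nin : (a, inr a) \notin M by apply: Ha.
set N := (a, inr a) |: M.
have HN : is_matching (Eall r rk) N.
  move/matchingP: HMm => [HG HD]; apply/matchingP; split.
  - move=> e; rewrite !inE => /orP [/eqP ->|/HG] //; by rewrite /Eall /= eqxx.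
  - have unmE := proj1 (unmatchedE _ _) Ha.
    have bad : forall f v, f \in M -> inc (a, inr a) v -> inc f v -> False.
      move=> f v fM; rewrite /inc /= => /orP [] /eqP -> Hi.
      + by move: (unmE f fM); rewrite /inc Hi.
      + move: Hi; rewrite /= => /eqP [] E.
        have := HG f fM; rewrite /Eall -E /=; case: eqP => // E2 _.
        by move: (unmE f fM); rewrite /inc E2 eqxx.
    move=> e1 e2 v; rewrite !inE => /orP [/eqP ->|H1] /orP [/eqP ->|H2] // i1 i2.
    + by case: (bad _ _ H2 i1 i2).
    + by case: (bad _ _ H1 i2 i1).
    + exact: HD _ _ v H1 H2 i1 i2.
apply: (lex_from_L (N:=N) (i:=r.+1)) => //.
- by rewrite leqnn.
- move=> j Hj; rewrite /Lc; apply: eq_card => e; rewrite !inE.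
  case: (eqVneq e (a, inr a)) => [->|] //=.
  rewrite eqxx (negbTE nin) /=; apply/negP; lia.
- rewrite !Lc_all; first by rewrite cardsU1 nin.
  + move=> e; rewrite !inE => /orP [/eqP ->|He]; first by rewrite /= eqxx.
    by case/andP: (M_rk He).
  + by move=> e He; case/andP: (M_rk He).
Qed.

End Irving.

Lemma inc_two (A Q : finType) (e : A * Q) v w : inc e v -> inc e w -> v <> w ->
  (v = inl e.1 /\ w = inr e.2) \/ (v = inr e.2 /\ w = inl e.1).
Proof. by rewrite /inc => /orP [] /eqP -> /orP [] /eqP ->; auto. Qed.

Section Irving2.
Variables (A P : finType) (r : nat) (rk : A -> P -> nat).
Hypothesis Hrk : forall a p, rk a p <= r.
Variable M : {set A * (P + A)}.
Hypothesis HM : rank_maximal r rk M.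

Local Notation F k := (Gp r rk k).
Local Notation rkx := (rkx r rk).
Local Notation ev k v := (even_v (Gp r rk k) v).
Local Notation od k v := (odd_v (Gp r rk k) v).
Local Notation Mk := (Mk r rk M).
Local Notation Lc := (Lc r rk).

Definition IrvP j := (forall e, e \in Mk j -> F j e.1 e.2) /\ is_max_matching (F j) (Mk j).

Definition Xp j (v : A + (P + A)) : Prop :=
  match v with inl a => ~ ev j (inl a) | inr p => od j (inr p) end.

Lemma Xp_notev j v : Xp j v -> ~ ev j v.
Proof. case: v => [a|p] //= Ho He; apply: (odd_notD Ho); exact: even_D He. Qed.

Lemma Xp_OU j v : Xp j v -> OU r rk j v.
Proof. move/Xp_notev; exact: (proj2 (OU_iff _ _ _ _)). Qed.

Lemma F_Eall k X : is_matching (F k) X -> is_matching (Eall r rk) X.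
Proof.
move=> H; apply: (sub_matching H (subxx X)) => e eX; case: H => [H _].
by case/andP: (F_rk (H e eX)).
Qed.

Lemma HMm : is_matching (Eall r rk) M.
Proof. by case: HM. Qed.

Lemma inj_bound j k N' : j <= k -> IrvP j -> is_matching (F k.+1) N' ->
  (forall v, ~ unmatched (Mk j) v -> ~ unmatched N' v) ->
  #|Mk j| <= #|[set e in N' | rkx e.1 e.2 <= j.+1]|.
Proof.
move=> Hjk [Hsub [HMj Hmaxj]] HN' Hcov.
case: (set_0Vmem (Mk j)) => [->|[e0 He0]]; first by rewrite cards0.
move/matchingP: (HMj) => [_ HDj]; move/matchingP: (HN') => [HGN HDN].
set X := [set v | pb (Xp j v)].
have XP : forall v, v \in X -> Xp j v by move=> v; rewrite inE => /pbP.
have Xcov : forall v, v \in X -> ~ unmatched (Mk j) v.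
  move=> v /XP /Xp_notev Hv Hu; apply: Hv; apply: D_even; by exists (Mk j).
apply: (@leq_trans #|X|).
- pose f (e : A * (P + A)) : A + (P + A) := if pb (ev j (inl e.1)) then inr e.2 else inl e.1.
  have finj : {in Mk j &, injective f}.
    move=> e e' He He'; rewrite /f; case: pbP => H1; case: pbP => H2 // [] E.
    + apply: (HDj e e' (inr e.2)) => //; by rewrite /inc ?E eqxx ?orbT.
    + apply: (HDj e e' (inl e.1)) => //; by rewrite /inc ?E eqxx ?orbT.
  rewrite -(card_in_imset finj); apply: subset_leq_card; apply/subsetP => v /imsetP [e He ->].
  rewrite inE; apply/pbP; rewrite /f; case: pbP => H //=.
  apply: (odd_intro (x := inr e.2) (w := inl e.1)); first exact: (Hsub e He).
  exact: even_D H.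
- pose g v := odflt e0 [pick e in N' | inc e v].
  have gP : forall v, v \in X -> g v \in N' /\ inc (g v) v.
    move=> v Hv; rewrite /g; case: pickP => [e /andP [eN ie] //|H].
    case: (covered_inc (Hcov v (Xcov v Hv))) => e [eN ie]; by move: (H e); rewrite eN ie.
  have Hjk' : j < k.+1 by rewrite ltnS.
  have grk : forall v, v \in X -> rkx (g v).1 (g v).2 <= j.+1.
    move=> v Hv; case: (gP v Hv) => gN gi; rewrite leqNgt; apply/negP => Hlt.
    have [_ H2] := L_down Hjk' (HGN _ gN).
    case: (H2 Hlt) => Ha Hp; have := Xp_OU (XP v Hv).
    by move: gi; rewrite /inc => /orP [] /eqP ->.
  have ginj : {in X &, injective g}.
    move=> v w Hv Hw E; apply: NNPP => nvw.
    case: (gP v Hv) => gN gv; case: (gP w Hw) => _ gw; rewrite E in gv gN.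
    have Hr := grk w Hw.
    move: gv gw gN Hr; move: (g w) => e gv gw gN Hr.
    have [H1 _] := L_down Hjk' (HGN _ gN).
    case: (H1 Hr) => _; apply; right.
    have XPv := XP _ Hv; have XPw := XP _ Hw.
    case: (inc_two gv gw nvw) => [[Ev Ew]|[Ev Ew]]; subst v w; move: XPv XPw => /= X1 X2.
    + by split => //; apply: (Xp_OU (v := inl e.1)).
    + by split => //; apply: (Xp_OU (v := inl e.1)).
  rewrite -(card_in_imset ginj); apply: subset_leq_card; apply/subsetP => e' /imsetP [v Hv ->].
  rewrite inE; case: (gP v Hv) => -> _ /=; exact: grk.
Qed.


Lemma unm_Mk e j : e \in M -> j.+1 < rkx e.1 e.2 ->
  unmatched (Mk j) (inl e.1) /\ unmatched (Mk j) (inr e.2).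
Proof.
move=> eM Hlt; move/matchingP: HMm => [_ HD].
have aux : forall v, inc e v -> unmatched (Mk j) v.
  move=> v iv; apply/unmatchedE => f; rewrite inE => /andP [fM fle]; apply/negP => Hi.
  have E := HD f e v fM eM Hi iv; subst f.
  by move: (leq_trans Hlt fle); rewrite ltnn.
by split; apply: aux; rewrite /inc eqxx ?orbT.
Qed.

Lemma ev_unm j X v : is_max_matching (F j) X -> unmatched X v -> ev j v.
Proof. by move=> H1 H2; apply: D_even; exists X. Qed.

Lemma ev_notOU3 j v : ev j v -> ~ OU r rk j v.
Proof. by move=> H /(OU_iff _ _ _ _). Qed.

Lemma Irv0 : IrvP 0.
Proof.
have Hsub : forall e, e \in Mk 0 -> F 0 e.1 e.2.
  move=> e; rewrite inE => /andP [eM H]; case/andP: (M_rk Hrk HM eM) => H0 _.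
  by rewrite /Gp /=; apply/eqP; rewrite eqn_leq H H0.
split => //; split; first exact: sub_matching HMm (Mk_sub _ _ _ _) Hsub.
move=> N HN; rewrite leqNgt; apply/negP => Hlt.
apply: (lex_from_L HM (N:=N) (i:=1)) => //.
- exact: F_Eall HN.
- by move=> j; rewrite ltnS leqn0 => /eqP ->; rewrite !Lc0 //; [exact: HMm|exact: F_Eall HN].
- rewrite (Lc_all (X := N)) //; move=> e eN; case: HN => [H _]; by case/andP: (F_rk (H e eN)).
Qed.

Lemma Irv_step k : k < r -> (forall j, j <= k -> IrvP j) -> IrvP k.+1.
Proof.
move=> Hkr IH.
move/matchingP: HMm => [HGM HDM].
have Hsub : forall e, e \in Mk k.+1 -> F k.+1 e.1 e.2.
  move=> [a p]; rewrite inE => /andP [eM Hle] /=.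
  case: (leqP (rkx a p) k.+1) => Hk.
  - have eMk : (a, p) \in Mk k by rewrite inE eM Hk.
    have [Hs [HMk Hmk]] := IH k (leqnn k).
    apply/Fsucc; left; split; first exact: (Hs _ eMk).
    have Hm : mate (Mk k) (inl a) (inr p) by [].
    case=> [[Ho HOU]|[Ho HOU]].
    + apply: (ev_notOU3 _ HOU); apply: D_even; exact: mate_odd (conj HMk Hmk) Hm Ho.
    + apply: (ev_notOU3 _ HOU); apply: D_even; exact: mate_odd (conj HMk Hmk) (mate_sym Hm) Ho.
  - have E : rkx a p = k.+2 by apply/eqP; rewrite eqn_leq Hle Hk.
    apply/Fsucc; right; split => //.
    suff : forall m, m <= k.+1 -> (stage r rk m).2 a p by apply.
    elim => [|m IHm] Hm; first by rewrite /= E.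
    apply/Rsucc; split; first by apply: IHm; apply: ltnW.
    have [_ HMm'] := IH m Hm.
    have Hlt2 : m.+1 < rkx a p by rewrite E /= ltnS.
    have [U1 U2] := unm_Mk (j := m) eM Hlt2.
    case=> H; [apply: (ev_notOU3 _ H); exact: ev_unm HMm' U1|apply: (ev_notOU3 _ H); exact: ev_unm HMm' U2].
have HMk : is_matching (F k.+1) (Mk k.+1) by exact: sub_matching HMm (Mk_sub _ _ _ _) Hsub.
split => //; split => // N HN; rewrite leqNgt; apply/negP => Hlt.
case: (berge HMk HN Hlt) => N' [HN' Hlt' Hcov].
apply: (lex_from_L HM (N:=N') (i:=k.+2)).
- exact: F_Eall HN'.
- by rewrite /= ltnS.
- case => [|j] Hj; first by rewrite !Lc0 //; [exact: HMm|exact: F_Eall HN'].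
  have Hjk : j <= k by rewrite -ltnS.
  have [HsJ [HMj Hmaxj]] := IH j Hjk.
  apply/eqP; rewrite eqn_leq; apply/andP; split.
  + rewrite /Lc -/(Mk j); apply: Hmaxj.
    apply: (sub_matching HN' (X := [set e in N' | rkx e.1 e.2 <= j.+1])).
    * by apply/subsetP => e; rewrite inE => /andP [].
    * move=> e; rewrite inE => /andP [eN' He]; case: HN' => [HG _].
      by case: (L_down (k := j) (m := k.+1) (leq_ltn_trans Hjk (ltnSn k)) (HG _ eN')) => H _; case: (H He).
  + rewrite /Lc -/(Mk j); apply: (inj_bound Hjk (IH j Hjk) HN') => v Hv.
    apply: Hcov => Hu; apply: Hv; apply: unmatched_sub Hu.
    apply: Mk_mono; apply: (leq_trans Hjk); exact: leqnSn.
- rewrite (Lc_all (X := N')) //; move=> e eN; case: HN' => [H _]; by case/andP: (F_rk (H e eN)).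
Qed.

Lemma Irv k : k <= r -> IrvP k.
Proof.
have H : forall n, n <= r -> forall j, j <= n -> IrvP j.
  elim => [|n IHn] Hn j Hj; first by move: Hj; rewrite leqn0 => /eqP ->; exact: Irv0.
  move: Hj; rewrite leq_eqVlt => /orP [/eqP ->|Hj].
  - apply: Irv_step => //; apply: IHn; exact: ltnW.
  - apply: IHn => //; exact: ltnW.
by move=> Hk; apply: (H _ Hk); apply: leqnn.
Qed.

End Irving2.

Section Final.
Variables (A P : finType) (r : nat) (rk : A -> P -> nat).
Hypothesis Hrk : forall a p, rk a p <= r.
Variable M : {set A * (P + A)}.
Hypothesis HM : rank_maximal r rk M.

Local Notation F k := (Gp r rk k).
Local Notation rkx := (rkx r rk).
Local Notation ev k v := (even_v (Gp r rk k) v).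
Local Notation od k v := (odd_v (Gp r rk k) v).
Local Notation Mk := (Mk r rk M).

Lemma M_max : is_max_matching (F r) M.
Proof. by have [_ H] := Irv Hrk HM (leqnn r); rewrite (Mk_r Hrk HM) in H. Qed.

Lemma M_F e : e \in M -> F r e.1 e.2.
Proof. by case: M_max => [[H _] _]; apply: H. Qed.

Lemma ev_notOU k v : ev k v -> ~ OU r rk k v.
Proof. by move=> H /(OU_iff _ _ _ _). Qed.

Lemma notOU_ev k v : ~ OU r rk k v -> ev k v.
Proof. move=> H; apply: NNPP => H1; apply: H; exact/OU_iff. Qed.

Lemma ev_notod k v : ev k v -> ~ od k v.
Proof. move=> H Ho; apply: (odd_notD Ho); exact: even_D. Qed.

Lemma M_Gred a p : (a, p) \in M -> Gred r rk a p.
Proof.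
move=> H; split; first exact: (M_F H).
have Hm : mate M (inl a) (inr p) by [].
case=> [[Ho HOU]|[Ho HOU]].
- apply: (ev_notOU _ HOU); apply: D_even; exact: mate_odd M_max Hm Ho.
- apply: (ev_notOU _ HOU); apply: D_even; exact: mate_odd M_max (mate_sym Hm) Ho.
Qed.

Lemma fst_inj (X : {set A * (P + A)}) G : is_matching G X -> {in X &, injective (fun e => e.1)}.
Proof.
move/matchingP => [_ HD] e e' He He' E; apply: (HD e e' (inl e.1)) => //; by rewrite /inc ?E eqxx.
Qed.

Lemma snd_inj (X : {set A * (P + A)}) G : is_matching G X -> {in X &, injective (fun e => e.2)}.
Proof.
move/matchingP => [_ HD] e e' He He' E; apply: (HD e e' (inr e.2)) => //; by rewrite /inc ?E eqxx ?orbT.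
Qed.

Lemma card_M : #|M| = #|A|.
Proof.
case: M_max => HMm _.
rewrite -(card_in_imset (fst_inj HMm)).
have -> : [set e.1 | e in M] = [set: A]; last by rewrite cardsT.
apply/setP => a; rewrite inE; case: (covered_inc (M_cover Hrk HM (a := a))) => e [eM ie].
apply/imsetP; exists e => //; move: ie; rewrite /inc /= ?orbF => /eqP [] -> //.
Qed.

Lemma Dr_app N a : is_max_matching (F r) N -> ~ unmatched N (inl a).
Proof.
move=> [HN Hmax] Ha; have := Hmax _ (proj1 M_max); rewrite card_M.
rewrite -(card_in_imset (fst_inj HN)).
have : [set e.1 | e in N] \subset [set~ a].
  apply/subsetP => b /imsetP [e eN ->]; rewrite !inE; apply/eqP => E.
  by move: ((proj1 (unmatchedE _ _) Ha) e eN); rewrite /inc E eqxx.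
move/subset_leq_card; rewrite cardsC1 => H1 H2.
have := leq_trans H2 H1.
have H3 : 0 < #|A| by apply/card_gt0P; exists a.
lia.
Qed.

Lemma part1 p : (forall a, (a, p) \notin M) -> in_all_even r rk p /\ is_sink r rk M p.
Proof.
move=> Hp.
have Hall : in_all_even r rk p.
  move=> k Hk; have [_ Hmk] := Irv Hrk HM Hk.
  apply: D_even; exists (Mk k); split => //.
  apply: (unmatched_sub (Mk_sub _ _ _ _)); exact: Hp.
split => //; split => // p' [_ [a [H _]]]; by move: (Hp a); rewrite H.
Qed.

Lemma swe_even x y : swe r rk M x y -> (ev r (inr x) <-> ev r (inr y)).
Proof.
case=> _ [a [Hax Hay]]; split => Hev.
- have Ho : od r (inl a) by apply: (odd_intro (w := inr x)); [exact: (M_F Hax)|exact: even_D].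
  apply: notOU_ev => HOU; case: Hay => _; apply; by left.
- have Ho : od r (inl a) by apply: (odd_intro (w := inr y)); [exact: (proj1 Hay)|exact: even_D].
  apply: D_even; apply: (mate_odd M_max (x := inl a)) Ho; exact: Hax.
Qed.

Lemma conn_even x y : gm_connected r rk M x y -> (ev r (inr x) <-> ev r (inr y)).
Proof.
elim => [u v /swe_even //|u|u v _ [H1 H2]|u v w _ [H1 H2] _ [H3 H4]]; split; auto.
Qed.


Lemma part2a p : in_sink_comp r rk M p <-> ev r (inr p).
Proof.
split.
- case=> q [[_ Hq] Hc]; apply/(conn_even Hc); exact: Hq.
- move=> Hp; apply: NNPP => Hns.
  set S := [set x | pb (gm_connected r rk M p x)].
  have SP : forall x, x \in S -> gm_connected r rk M p x by move=> x; rewrite inE => /pbP.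
  have pS : p \in S by rewrite inE; apply/pbP; apply: rst_refl.
  have Sev : forall x, x \in S -> ev r (inr x) by move=> x /SP /conn_even H; apply/H.
  have Scov : forall x, x \in S -> ~ unmatched M (inr x).
    move=> x xS Hu; apply: Hns; exists x; split; last exact: SP.
    by case: (part1 (p := x) Hu) => _.
  case: (even_D Hp) => N [HNm HNp]; case: (HNm) => HN _.
  have HMm := proj1 M_max.
  set MS := [set e in M | e.2 \in S].
  have cMS : #|MS| = #|S|.
    have inj : {in MS &, injective (fun e : A * (P + A) => e.2)}.
      by move=> e e' /setIdP [H _] /setIdP [H' _]; apply: (snd_inj HMm).
    rewrite -(card_in_imset inj); apply: eq_card => x; apply/imsetP/idP.
    + by case=> e /setIdP [_ H] ->.
    + move=> xS; case: (covered_inc (Scov x xS)) => e [eM ie].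
      have E : e.2 = x by move: ie; rewrite /inc /= => /eqP [].
      by exists e => //; rewrite inE eM E xS.
  set AS := [set e.1 | e in MS].
  have cAS : #|AS| = #|MS|.
    apply: card_in_imset => e e' /setIdP [H _] /setIdP [H' _]; exact: (fst_inj HMm).
  set NS := [set e in N | e.1 \in AS].
  have cNS : #|NS| = #|AS|.
    have inj : {in NS &, injective (fun e : A * (P + A) => e.1)}.
      by move=> e e' /setIdP [H _] /setIdP [H' _]; apply: (fst_inj HN).
    rewrite -(card_in_imset inj); apply: eq_card => a; apply/imsetP/idP.
    + by case=> e /setIdP [_ H] ->.
    + move=> aS; case: (covered_inc (Dr_app (a := a) HNm)) => e [eN ie].
      have E : e.1 = a by move: ie; rewrite /inc /= ?orbF => /eqP [].
      by exists e => //; rewrite inE eN E aS.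
  have NS_S : forall e, e \in NS -> e.2 \in S :\ p.
    move=> [a y] /setIdP [eN /imsetP [[a' x] /setIdP [axM xS] /= E]]; subst a'.
    have Hx := Sev x xS.
    have Ho : od r (inl a) by apply: (odd_intro (w := inr x)); [exact: (M_F axM)|exact: even_D].
    have Hy : ev r (inr y) by apply: D_even; apply: (mate_odd HNm (x := inl a)) Ho; exact: eN.
    rewrite /= !inE; apply/andP; split.
    + apply/eqP => E; subst y; by move: ((proj1 (unmatchedE _ _) HNp) _ eN); rewrite /inc eqxx orbT.
    + apply/pbP; case: (eqVneq x y) => [<-|nxy]; first exact: SP.
      apply: (rst_trans _ _ _ x); first exact: SP.
      apply: rst_step; split; first by apply/eqP.
      exists a; split => //; split; first by case: HN => [HG _]; exact: (HG _ eN).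
      case=> [[_ HOU]|[Hoy _]]; [exact: (ev_notOU Hy HOU)|exact: (ev_notod Hy Hoy)].
  have inj2 : {in NS &, injective (fun e : A * (P + A) => e.2)}.
    by move=> e e' /setIdP [H _] /setIdP [H' _]; apply: (snd_inj HN).
  have : #|NS| <= #|S :\ p|.
    rewrite -(card_in_imset inj2); apply: subset_leq_card; apply/subsetP => x /imsetP [e He ->].
    exact: NS_S.
  rewrite cNS cAS cMS (cardsD1 p S) pS; lia.
Qed.

Lemma post_notodd p : ~ od r (inr p).
Proof.
move=> /odd_elim [[a|q] [HD Hadj]] //.
case: HD => N [HNm Ha]; exact: (Dr_app HNm Ha).
Qed.

Lemma part2b p : in_nonsink_comp r rk M p <-> unreach_v (F r) (inr p).
Proof.
split.
- move=> H; split; last exact: post_notodd.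
  move/(part2a p) => [q [Hq Hc]]; exact: (H q Hc Hq).
- case=> Hne _ q Hc Hq; apply: Hne; apply/(part2a p); by exists q.
Qed.


Definition cnt (x : P + A) : nat := \sum_(k < r.+1) ~~ pb (ev k (inr x)).
Definition cA (a : A) : nat := \sum_(k < r.+1) (~~ pb (ev k (inl a)) && pb (od k (inl a))).

Lemma stage_id k a z : k <= r -> Gred r rk a z ->
  ((~~ pb (ev k (inr z))) : nat) + ((~~ pb (ev k (inl a)) && pb (od k (inl a))) : nat) = ((rkx a z <= k.+1) : nat).
Proof.
move=> Hk Hg; have [D1 D2] := Gred_down Hk Hg.
case: (pbP (ev k (inl a))) => Hea /=.
- rewrite addn0; case: (leqP (rkx a z) k.+1) => Hr.
  + have [HF _] := D1 Hr; case: pbP => // Hez; exfalso.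
    exact: (D_indep (x := inl a) (y := inr z)) HF (even_D Hea) (even_D Hez).
  + have [_ Hz] := D2 Hr; case: pbP => // Hez; exfalso; apply: Hez; exact: notOU_ev.
- have HOUa : OU r rk k (inl a) by apply/OU_iff.
  have Hr : rkx a z <= k.+1 by rewrite leqNgt; apply/negP => /D2 [H _]; exact: H.
  rewrite Hr; have [HF Hdel] := D1 Hr.
  case: (pbP (od k (inl a))) => Hoa /=.
  + case: pbP => // Hez; exfalso; apply: Hez; apply: notOU_ev => HOU; apply: Hdel; by left.
  + case: pbP => // Hez; exfalso; apply: Hoa.
    apply: (odd_intro (w := inr z)); [exact: HF|exact: even_D].
Qed.

Lemma sum_ind n i : \sum_(k < n) ((i <= k.+1) : nat) = n - i.-1.
Proof.
elim: n => [|n IH]; first by rewrite big_ord0.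
rewrite big_ord_recr /= IH; case: leqP => H /=; lia.
Qed.

Lemma cnt_id a z : Gred r rk a z -> cnt z + cA a = r.+1 - (rkx a z).-1.
Proof.
move=> Hg; rewrite /cnt /cA -big_split /=.
rewrite (eq_bigr (fun k : 'I_r.+1 => ((rkx a z <= k.+1) : nat))); first exact: sum_ind.
move=> k _; apply: stage_id => //; rewrite -ltnS; exact: ltn_ord.
Qed.

Lemma swe_w x y : swe r rk M x y -> swe_weight r rk M x y = ((cnt x)%:Z - (cnt y)%:Z)%R.
Proof.
case=> nxy [a [Hax Hay]].
have HMm := proj1 M_max; move/matchingP: HMm => [_ HD].
rewrite /swe_weight (big_pred1 a) /=; last first.
  move=> b /=; apply/idP/eqP => [Hb|->] //.
  have := HD _ _ (inr x) Hb Hax; rewrite /inc /= eqxx ?orbT.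
by move=> /(_ erefl erefl) [].
have H1 := cnt_id (M_Gred Hax); have H2 := cnt_id Hay.
have R1 := F_rk (M_F Hax); have R2 := F_rk (proj1 Hay).
move: H1 H2 R1 R2; rewrite /=.
move: (rkx a x) (rkx a y) (cnt x) (cnt y) (cA a) => u v cx cy c; lia.
Qed.

Lemma tele (g : nat -> int) n : (\sum_(i < n) (g i - g i.+1))%R = (g 0 - g n)%R.
Proof.
elim: n => [|n IH]; first by rewrite big_ord0 GRing.subrr.
by rewrite big_ord_recr /= IH GRing.addrA GRing.subrK.
Qed.

Lemma weight_eq p q s : dpath r rk M p q s -> dpath_weight r rk M p s = ((cnt p)%:Z - (cnt q)%:Z)%R.
Proof.
case=> _ Hl Hsw; rewrite /dpath_weight.
rewrite (eq_bigr (fun i : 'I_(size s) => ((cnt (nth p (p :: s) i))%:Z - (cnt (nth p (p :: s) i.+1))%:Z)%R)); last first.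
  move=> i _; apply: swe_w; exact: Hsw.
rewrite (tele (fun i => (cnt (nth p (p :: s) i))%:Z)%R) /=.
have := nth_last p (p :: s); rewrite /= => ->; by rewrite Hl.
Qed.

Lemma cnt0 x : cnt x = 0 <-> in_all_even r rk x.
Proof.
rewrite /cnt; split.
- move/eqP; rewrite sum_nat_eq0 => /forallP H k Hk.
  move: (H (Ordinal (n := r.+1) (m := k) Hk)) => /=; by case: pbP.
- move=> H; apply/eqP; rewrite sum_nat_eq0; apply/forallP => i; apply/implyP => _.
  have := H i (ltnSE (ltn_ord i)); by case: pbP.
Qed.

Lemma part3 p q s : dpath r rk M p q s -> is_sink r rk M q ->
  (dpath_weight r rk M p s = 0%R <-> in_all_even r rk p).
Proof.
move=> Hd [_ Hq]; rewrite (weight_eq Hd) (proj2 (cnt0 q) Hq) GRing.subr0 -(cnt0 p).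
by split => [[]|->].
Qed.

End Final.

Unset Implicit Arguments.

Theorem lemma4 (A P : finType) (r : nat) (rk : A -> P -> nat)
  (Hrk : forall a p, rk a p <= r)
  (M : {set A * (P + A)}) (HM : rank_maximal r rk M) :
  (forall p : P + A, (forall a, (a, p) \notin M) ->
       in_all_even r rk p /\ is_sink r rk M p) /\
  (forall p : P + A, in_sink_comp r rk M p <-> even_v (Gp r rk r) (inr p)) /\
  (forall p : P + A, in_nonsink_comp r rk M p <-> unreach_v (Gp r rk r) (inr p)) /\
  (forall (p q : P + A) (s : seq (P + A)), dpath r rk M p q s -> is_sink r rk M q ->
       (dpath_weight r rk M p s = 0%R <-> in_all_even r rk p)).
Proof.
split; first by move=> p; exact: (part1 Hrk HM).
split; first by move=> p; exact: (part2a Hrk HM).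
split; first by move=> p; exact: (part2b Hrk HM).
move=> p q s; exact: (part3 Hrk HM).
Qed.
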